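(* Let $n,k\in\mathbb{N}$ and let $\mathcal{C}$ be a class of finite graphs such that $\mathrm{wd}^\otimes_n(G)\le k$ for all $G\in\mathcal{C}$. The following are equivalent: (1) $\mathcal{C}$ is $\mathrm{MSO}_1$-orderable; (2) $\mathcal{C}$ has property $\mathsf{CUT}$; (3) there is $d\in\mathbb{N}$ such that every $G\in\mathcal{C}$ has a $\otimes$-decomposition $(H_v)_{v\in T}$ of height at most $n$ and width at most $k$ in which every vertex of $T$ has outdegree at most $d$; (4) $\mathcal{C}$ is finite (up to isomorphism).
   Context: A graph with ports in $[k]=\{0,\dots,k-1\}$ is a graph with $\pi:V\to[k]$; for $R\subseteq[k]\times[k]$, $G\otimes_R H$ is the disjoint union plus all edges $\{x,y\}$ with $x,y$ in different operands, $x$ of label $a$, $y$ of label $b$, $(a,b)\in R$ (associative, commutative); $\mathrm{Del}$ deletes labels. A $\otimes$-decomposition of $G=\langle V,E\rangle$ of width $k$ is a family $(H_v)_{v\in T}$ of graphs with ports in $[k]$ indexed by a rooted tree $T$ such that: $H_{\mathrm{root}}$ is $G$ with some labelling; $H_v$ has exactly one vertex for each leaf $v$; and for every internal node $v$ with children $u_0,\dots,u_{d-1}$ there is $R_v\subseteq[k]\times[k]$ with $\mathrm{Del}(H_v)=\mathrm{Del}(H_{u_0}\otimes_{R_v}\cdots\otimes_{R_v}H_{u_{d-1}})$ (labels of $H_v$ and its children unrelated). Its height is the height of $T$. $\mathrm{wd}^\otimes_n(G)$ is the least $k$ such that $G$ has a $\otimes$-decomposition of width $\le k$ and height $\le n$.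 $\mathrm{Cut}(G,k)$ is the maximal $m$ with $G\cong\mathrm{Del}(H_0\otimes_R\cdots\otimes_R H_{m-1})$ for nonempty $H_i$ with ports in $[k]$ and some $R$; $\mathcal{C}$ has $\mathsf{CUT}$ if there is $f$ with $\mathrm{Cut}(G,k)\le f(k)$ for all $G\in\mathcal{C}$, $k$. $\mathcal{C}$ is $\mathrm{MSO}_1$-orderable if there is an MSO-formula $\varphi(x,y;Z_0,\dots,Z_{m-1})$ such that for every nonempty $G\in\mathcal{C}$ there are vertex sets $P_i$ with $\{(a,b):\lfloor G\rfloor\models\varphi(a,b;\bar P)\}$ a linear order on the vertices, where $\lfloor G\rfloor$ is the structure with universe $V$ and edge relation. *)

(* Defs.v *)
From mathcomp Require Import all_boot.
Set Implicit Arguments. Unset Strict Implicit. Unset Printing Implicit Defensive.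

Record graph := Graph {
  gV : finType;
  gE : rel gV;
  gE_sym : symmetric gE;
  gE_irr : irreflexive gE }.

Definition iso (G1 G2 : graph) : Prop :=
  exists f : gV G1 -> gV G2, bijective f /\ forall x y, gE (f x) (f y) = gE x y.

(** * Graphs with ports in [k] = {0,..,k-1};  Del = pg (forget labels) *)
Record pgraph (k : nat) := PGraph { pg : graph; plab : gV pg -> 'I_k }.

Definition empty_rel : rel void := fun _ _ => false.
Lemma empty_sym : symmetric empty_rel. Proof. by []. Qed.
Lemma empty_irr : irreflexive empty_rel. Proof. by []. Qed.
Definition empty_pgraph k : pgraph k :=
  @PGraph k (Graph empty_sym empty_irr) (fun v : void => match v with end).

Section Prod.
Variables (k : nat) (R : rel 'I_k) (G H : pgraph k).
Definition prod_V : finType := (gV (pg G) + gV (pg H))%type.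
Definition prod_lab (x : prod_V) : 'I_k :=
  match x with inl a => plab a | inr b => plab b end.
Definition prod_E : rel prod_V := fun x y =>
  match x, y with
  | inl a, inl b => gE a b
  | inr a, inr b => gE a b
  | _, _ => R (prod_lab x) (prod_lab y) || R (prod_lab y) (prod_lab x)
  end.
Lemma prod_sym : symmetric prod_E.
Proof. move=> [a|a] [b|b] /=; [exact: gE_sym | exact: orbC | exact: orbC | exact: gE_sym]. Qed.
Lemma prod_irr : irreflexive prod_E.
Proof. move=> [a|a] /=; exact: gE_irr. Qed.
Definition pprod : pgraph k := @PGraph k (Graph prod_sym prod_irr) prod_lab.
End Prod.

Definition pprodn k (R : rel 'I_k) (Hs : seq (pgraph k)) : pgraph k :=
  foldr (pprod R) (empty_pgraph k) Hs.

Fixpoint allP (T : Type) (P : T -> Prop) (s : seq T) : Prop :=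
  match s with [::] => True | x :: s' => P x /\ allP P s' end.

Inductive dtree (k : nat) : Type := DNode of pgraph k & seq (dtree k).

Definition droot k (t : dtree k) : pgraph k := let: DNode H _ := t in H.

(** validity: leaves carry exactly one vertex; at an internal node v with
    children u_0..u_{d-1} there is R with Del(H_v) = Del(H_u0 (x)_R ... (x)_R H_u(d-1))
    (equality of unlabelled graphs, up to isomorphism) *)
Fixpoint dvalid k (t : dtree k) : Prop :=
  match t with
  | DNode H ts =>
      (if ts is [::] then #|gV (pg H)| = 1
       else exists R : rel 'I_k, iso (pg H) (pg (pprodn R (map (@droot k) ts))))
      /\ (fix go (l : seq (dtree k)) : Prop :=
            match l with [::] => True | t' :: l' => dvalid t' /\ go l' end) ts
  end.

(** height of the tree (a single node has height 0) *)
Fixpoint dheight k (t : dtree k) : nat :=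
  match t with
  | DNode _ ts =>
      (fix go (l : seq (dtree k)) : nat :=
         match l with [::] => 0 | t' :: l' => maxn (dheight t').+1 (go l') end) ts
  end.

Fixpoint doutdeg_le k (d : nat) (t : dtree k) : Prop :=
  match t with
  | DNode _ ts =>
      size ts <= d /\
      (fix go (l : seq (dtree k)) : Prop :=
         match l with [::] => True | t' :: l' => doutdeg_le d t' /\ go l' end) ts
  end.

Definition is_decomp (G : graph) k (t : dtree k) : Prop :=
  dvalid t /\ iso (pg (droot t)) G.

Definition wd_le (n : nat) (G : graph) (k : nat) : Prop :=
  exists k', k' <= k /\ exists t : dtree k', is_decomp G t /\ dheight t <= n.

Definition graph_class := graph -> Prop.

Definition bounded_outdeg_decomps (n k : nat) (C : graph_class) : Prop :=
  exists d : nat, forall G, C G ->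
    exists k', k' <= k /\
      exists t : dtree k', [/\ is_decomp G t, dheight t <= n & doutdeg_le d t].

Definition cut_witness (G : graph) (k m : nat) : Prop :=
  exists (Hs : seq (pgraph k)) (R : rel 'I_k),
    [/\ size Hs = m, allP (fun H => 0 < #|gV (pg H)|) Hs & iso G (pg (pprodn R Hs))].

(** property CUT : Cut(G,k) <= f(k), i.e. every m witnessing a cut is <= f k *)
Definition has_CUT (C : graph_class) : Prop :=
  exists f : nat -> nat, forall G, C G -> forall k m, cut_witness G k m -> m <= f k.

Definition finite_upto_iso (C : graph_class) : Prop :=
  exists (m : nat) (F : nat -> graph), forall G, C G -> exists2 i, i < m & iso G (F i).

Inductive mso : Type :=
  | MEdge of nat & nat
  | MEq of nat & nat
  | MIn of nat & nat         (* x_i \in X_j *)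
  | MNot of mso
  | MAnd of mso & mso
  | MEx1 of nat & mso
  | MEx2 of nat & mso.       (* exists X_j (vertex set) *)

Fixpoint sat (G : graph) (phi : mso) (v1 : nat -> gV G) (v2 : nat -> {set gV G})
    : Prop :=
  match phi with
  | MEdge i j => gE (v1 i) (v1 j)
  | MEq i j => v1 i = v1 j
  | MIn i j => v1 i \in v2 j
  | MNot f => ~ sat f v1 v2
  | MAnd f g => sat f v1 v2 /\ sat g v1 v2
  | MEx1 i f => exists a, sat f (fun l => if l == i then a else v1 l) v2
  | MEx2 j f => exists A, sat f v1 (fun l => if l == j then A else v2 l)
  end.

Definition linear_order (T : Type) (r : T -> T -> Prop) : Prop :=
  [/\ forall a, r a a,
      forall a b, r a b -> r b a -> a = b,
      forall a b c, r a b -> r b c -> r a c &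
      forall a b, r a b \/ r b a].

(** MSO_1-orderable: phi(x,y; Z_0,...) with x = first-order variable 0,
    y = first-order variable 1 (other first-order variables also read as y),
    Z_j = set variable j, instantiated by vertex sets P j. *)
Definition mso_orderable (C : graph_class) : Prop :=
  exists phi : mso, forall G, C G -> 0 < #|gV G| ->
    exists P : nat -> {set gV G},
      linear_order (fun a b => sat phi (fun i => if i == 0 then a else b) P).

(* Main.v *)
Require Import Defs.
From mathcomp Require Import all_boot.
From mathcomp Require Import zify.
From Stdlib Require Import Classical FunctionalExtensionality ClassicalEpsilon.
Set Implicit Arguments. Unset Strict Implicit. Unset Printing Implicit Defensive.
Notation allP := Defs.allP.


Lemma iso_refl G : iso G G.
Proof. exists id; split => //; exists id => //. Qed.

Lemma iso_sym G1 G2 : iso G1 G2 -> iso G2 G1.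
Proof. case=> f [[g fK gK] Hf]. exists g; split; first by exists f. move=> x y. by rewrite -Hf !gK. Qed.

Lemma iso_trans G1 G2 G3 : iso G1 G2 -> iso G2 G3 -> iso G1 G3.
Proof. case=> f [bf Hf] [g [bg Hg]]; exists (g \o f); split; [exact: bij_comp bg bf | by move=> x y /=; rewrite Hg Hf]. Qed.

Lemma iso_card G1 G2 : iso G1 G2 -> #|gV G1| = #|gV G2|.
Proof. case=> f [bf _]. exact: (bij_eq_card bf). Qed.

Lemma card_pprodn k (R : rel 'I_k) Hs :
  #|gV (pg (pprodn R Hs))| = sumn (map (fun H => #|gV (pg H)|) Hs).
Proof. elim: Hs => [|H Hs IH] /=; first by rewrite card_void. by rewrite card_sum IH. Qed.

Lemma allP_map (A B : Type) (f : A -> B) (P : B -> Prop) l : allP P (map f l) <-> allP (fun x => P (f x)) l.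
Proof. by elim: l => //= a l IH; rewrite IH. Qed.

Lemma allP_and (A : Type) (P Q : A -> Prop) l : allP P l -> allP Q l -> allP (fun x => P x /\ Q x) l.
Proof. by elim: l => //= a l IH [? ?] [? ?]; split; [split|apply: IH]. Qed.

Lemma allP_imp (A : Type) (P Q : A -> Prop) l : (forall x, P x -> Q x) -> allP P l -> allP Q l.
Proof. move=> H; elim: l => //= a l IH [? ?]; split; [exact: H|exact: IH]. Qed.

Lemma allP_mem (A : eqType) (P : A -> Prop) l : (forall x, x \in l -> P x) -> allP P l.
Proof. elim: l => //= a l IH H; split; [apply: H; exact: mem_head | apply: IH => x xl; apply: H; by rewrite inE xl orbT]. Qed.

Lemma sumn_le (A : Type) (f : A -> nat) b l : allP (fun x => f x <= b) l -> sumn (map f l) <= size l * b.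
Proof. elim: l => //= a l IH [H1 H2]; rewrite mulSn leq_add //; exact: IH. Qed.

Lemma sumn_ge (A : Type) (f : A -> nat) l : allP (fun x => 0 < f x) l -> size l <= sumn (map f l).
Proof. elim: l => //= a l IH [H1 H2]; rewrite -add1n leq_add //; exact: IH. Qed.

Lemma sumn_ge1 (A : Type) (f : A -> nat) l : allP (fun x => f x <= sumn (map f l)) l.
Proof. elim: l => //= a l IH; split; first exact: leq_addr.
apply: allP_imp IH => x H; exact: leq_trans H (leq_addl _ _). Qed.

Section Tree.
Variable k : nat.

Fixpoint dtree_ind' (P : dtree k -> Prop) (IH : forall H ts, allP P ts -> P (DNode H ts))
   (t : dtree k) : P t :=
  match t with DNode H ts => IH H ts ((fix go (l : seq (dtree k)) : allP P l :=
     match l with [::] => I | t' :: l' => conj (dtree_ind' IH t') (go l') end) ts) end.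

Lemma dvalidE H ts : dvalid (DNode H ts) <->
  (if ts is [::] then #|gV (pg H)| = 1
   else exists R : rel 'I_k, iso (pg H) (pg (pprodn R (map (@droot k) ts))))
  /\ allP (@dvalid k) ts.
Proof.
rewrite /=; split => -[h1 h2]; split => //; move: h2 {h1}; elim: ts => //= t ts IH [? ?]; split => //; exact: IH.
Qed.

Lemma dheightE H ts : dheight (DNode H ts) = foldr (fun (t : dtree k) m => maxn (dheight t).+1 m) 0 ts.
Proof. by elim: ts => //= t ts ->. Qed.

Lemma doutdegE d H ts : doutdeg_le d (DNode H ts) <-> size ts <= d /\ allP (@doutdeg_le k d) ts.
Proof.
rewrite /=; split => -[h1 h2]; split => //; move: h2 {h1}; elim: ts => //= t ts IH [? ?]; split => //; exact: IH.
Qed.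

Lemma dheight_child H ts : allP (fun t : dtree k => dheight t < dheight (DNode H ts)) ts.
Proof.
rewrite dheightE; elim: ts => //= t ts IH; split; first exact: leq_maxl.
apply: allP_imp IH => x H1; exact: leq_trans H1 (leq_maxr _ _).
Qed.

Lemma dheight_pos H (t : dtree k) ts : 0 < dheight (DNode H (t :: ts)).
Proof. by rewrite dheightE /= leq_max. Qed.

Lemma valid_pos (t : dtree k) : dvalid t -> 0 < #|gV (pg (droot t))|.
Proof.
elim/dtree_ind': t => H ts IH /dvalidE [h1 h2] /=.
case: ts IH h1 h2 => [|t ts] IH h1 h2; first by rewrite h1.
case: h1 => R /iso_card ->; rewrite card_pprodn /=.
case: IH h2 => IHt _ [vt _]. exact: leq_trans (IHt vt) (leq_addr _ _).
Qed.

Lemma doutdeg_mono d d' (t : dtree k) : d <= d' -> doutdeg_le d t -> doutdeg_le d' t.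
Proof.
move=> le; elim/dtree_ind': t => H ts IH /doutdegE [h1 h2]; apply/doutdegE; split.
  exact: leq_trans le.
by elim: ts IH h2 {h1} => //= t ts IHl [? ?] [? ?]; split; [auto | apply: IHl].
Qed.

Lemma valid_outdeg (t : dtree k) : dvalid t -> doutdeg_le #|gV (pg (droot t))| t.
Proof.
elim/dtree_ind': t => H ts IH /dvalidE [h1 h2].
change (doutdeg_le #|gV (pg H)| (DNode H ts)); apply/doutdegE.
case: ts IH h1 h2 => [|t ts] IH h1 h2; first by split.
case: h1 => R /iso_card ->; rewrite card_pprodn.
have pos : allP (fun t : dtree k => 0 < #|gV (pg (droot t))|) (t :: ts) := allP_imp (@valid_pos) h2.
have ge := sumn_ge1 (fun t => #|gV (pg (droot t))|) (t :: ts).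
rewrite -map_comp; split.
  exact: sumn_ge pos.
have := allP_and (allP_and IH h2) ge.
apply: allP_imp => x [[Hx vx] le]. exact: doutdeg_mono le (Hx vx).
Qed.

Lemma size_bound d (t : dtree k) : dvalid t -> doutdeg_le d t -> #|gV (pg (droot t))| <= d ^ dheight t.
Proof.
elim/dtree_ind': t => H ts IH /dvalidE [h1 h2] /doutdegE [h3 h4].
change (#|gV (pg H)| <= d ^ dheight (DNode H ts)).
case: ts IH h1 h2 h3 h4 => [|t ts] IH h1 h2 h3 h4; first by rewrite h1 dheightE.
case: h1 => R /iso_card ->; rewrite card_pprodn -map_comp.
have dpos : 0 < d by apply: leq_trans h3.
set m := (dheight (DNode H (t :: ts))).-1.
have hm : dheight (DNode H (t :: ts)) = m.+1 by rewrite prednK // dheight_pos.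
rewrite hm expnS; apply: leq_trans (leq_mul h3 (leqnn _)).
rewrite -(size_map (fun t0 => #|gV (pg (droot t0))|)) size_map.
apply: sumn_le.
have := allP_and (allP_and (allP_and IH h2) h4) (dheight_child H (t :: ts)).
apply: allP_imp => x [[[Hx vx] ox] hx] /=.
apply: leq_trans (Hx vx ox) _; rewrite leq_pexp2l //; by rewrite -ltnS -hm.
Qed.

End Tree.


Definition mkrel N (e : {ffun 'I_N * 'I_N -> bool}) : rel 'I_N :=
  fun x y => (x != y) && (e (x, y) || e (y, x)).
Lemma mkrel_sym N e : symmetric (@mkrel N e).
Proof. by move=> x y; rewrite /mkrel eq_sym orbC. Qed.
Lemma mkrel_irr N e : irreflexive (@mkrel N e).
Proof. by move=> x; rewrite /mkrel eqxx. Qed.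
Definition mkg N e := Graph (@mkrel_sym N e) (@mkrel_irr N e).

Definition codeG (B : nat) := {N : 'I_B.+1 & {ffun 'I_N * 'I_N -> bool}}.

Lemma bounded_size_finite (C : graph_class) B :
  (forall G, C G -> #|gV G| <= B) -> finite_upto_iso C.
Proof.
move=> HB.
pose L := enum (Finite.clone _ (codeG B)).
pose x0 : codeG B := existT _ ord0 [ffun _ => false].
exists (size L), (fun i => let s := nth x0 L i in mkg (tagged s)).
move=> G /HB le.
have ltN : #|gV G| < B.+1 by [].
pose e : {ffun 'I_#|gV G| * 'I_#|gV G| -> bool} := [ffun p => gE (enum_val p.1) (enum_val p.2)].
pose s : codeG B := existT (fun N : 'I_B.+1 => {ffun 'I_N * 'I_N -> bool}) (Ordinal ltN) e.
exists (index s L); first by rewrite index_mem mem_enum.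
rewrite /= nth_index ?mem_enum //=.
exists enum_rank; split; first exact: enum_rank_bij.
move=> x y /=; rewrite /mkrel /= !ffunE /= !enum_rankK (inj_eq enum_rank_inj).
case: eqP => [->|_]; first by rewrite gE_irr.
by rewrite (gE_sym y x) orbb.
Qed.

Lemma finite_bound C : finite_upto_iso C -> exists M, forall G, C G -> #|gV G| <= M.
Proof.
case=> m [F HF]; exists (\max_(i < m) #|gV (F i)|) => G /HF [i lt /iso_card ->].
exact: (leq_bigmax (Ordinal lt)).
Qed.

Lemma fin_CUT C : finite_upto_iso C -> has_CUT C.
Proof.
move=> /finite_bound [M HM]; exists (fun _ => M) => G CG k0 m0 [Hs [R [<- ne /iso_card e]]].
apply: leq_trans (HM _ CG); rewrite e card_pprodn; exact: sumn_ge ne.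
Qed.

Lemma fin_outdeg n k C : (forall G, C G -> wd_le n G k) -> finite_upto_iso C -> bounded_outdeg_decomps n k C.
Proof.
move=> Hwd /finite_bound [M HM]; exists M => G CG.
have [k' [le [t [[vt isot] ht]]]] := Hwd G CG.
exists k'; split => //; exists t; split => //.
apply: doutdeg_mono (valid_outdeg vt); rewrite (iso_card isot); exact: HM.
Qed.

Lemma outdeg_fin n k C : bounded_outdeg_decomps n k C -> finite_upto_iso C.
Proof.
case=> d Hd; apply: (@bounded_size_finite _ (d.+1 ^ n)) => G /Hd [k' [_ [t [[vt isot] ht od]]]].
rewrite -(iso_card isot); apply: leq_trans (size_bound vt od) _.
apply: (@leq_trans (d.+1 ^ dheight t)); last exact: leq_pexp2l.
by case: (dheight t) => [|e] //; rewrite leq_exp2r.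
Qed.

Definition MOr a b := MNot (MAnd (MNot a) (MNot b)).
Definition MFalse := MNot (MEq 0 0).
Definition orF (F : nat -> mso) (l : seq nat) := foldr (fun j acc => MOr (F j) acc) MFalse l.

Lemma sat_orF G F l v1 v2 : @sat G (orF F l) v1 v2 <-> exists2 j, j \in l & sat (F j) v1 v2.
Proof.
elim: l => [|j l IH] /=; first by split => [[]|[]].
split.
- move=> H; case: (classic (sat (F j) v1 v2)) => [h|h]; first by exists j; rewrite ?mem_head.
  case: (classic (sat (orF F l) v1 v2)) => [/IH [j' jl h']|h2]; last by case: H.
  by exists j' => //; rewrite inE jl orbT.
- case=> j'; rewrite inE => /orP [/eqP ->|jl] h' [h1 h2]; first by apply: h1.
  by apply: h2; apply/IH; exists j'.
Qed.

Definition ordphi M :=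
  orF (fun i => orF (fun j => MAnd (MIn 0 i) (MIn 1 j)) (iota i (M - i))) (iota 0 M).

Lemma sat_ordphi G M v1 v2 : @sat G (ordphi M) v1 v2 <->
  exists i j, [/\ i <= j, j < M, v1 0 \in v2 i & v1 1 \in v2 j].
Proof.
rewrite /ordphi sat_orF; split.
- case=> i; rewrite mem_iota add0n => /andP[_ iM] /sat_orF [j]; rewrite mem_iota subnKC ?(ltnW iM) //.
  case/andP => ij jM [h1 h2]; by exists i, j.
- case=> i [j [ij jM h1 h2]]; exists i; first by rewrite mem_iota add0n (leq_ltn_trans ij jM).
  apply/sat_orF; exists j => //; rewrite mem_iota subnKC ?ij //; exact: leq_trans (ltnW (leq_ltn_trans ij jM)) _.
Qed.

Lemma fin_mso C : finite_upto_iso C -> mso_orderable C.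
Proof.
case/finite_bound => M HM; exists (ordphi M) => G CG _.
exists (fun i => [set x : gV G | (enum_rank x : nat) == i]).
have key a b : sat (ordphi M) (fun i => if i == 0 then a else b)
     (fun i => [set x : gV G | (enum_rank x : nat) == i]) <-> enum_rank a <= enum_rank b.
  rewrite sat_ordphi /=; split.
  - by case=> i [j [ij _]]; rewrite !inE => /eqP -> /eqP ->.
  - move=> le; exists (enum_rank a), (enum_rank b); split; rewrite ?inE //.
    exact: leq_trans (ltn_ord _) (HM _ CG).
split.
- by move=> a; apply/key.
- move=> a b /key h1 /key h2; apply: enum_rank_inj; apply: val_inj => /=; apply/eqP; by rewrite eqn_leq h1.
- move=> a b c /key h1 /key h2; apply/key; exact: leq_trans h2.
- move=> a b; case: (leqP (enum_rank a) (enum_rank b)) => h; [left; exact/key | right; apply/key; exact: ltnW].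
Qed.


Section Dec.
Variables (G : graph) (kb : nat).
Local Notation V := (gV G).

Definition cross (T : eqType) (idx : V -> T) (lab : V -> nat) (R : nat -> nat -> bool) (S : {set V}) :=
  forall x y, x \in S -> y \in S -> idx x != idx y -> gE x y = R (lab x) (lab y) || R (lab y) (lab x).

Definition blk (T : eqType) (idx : V -> T) (S : {set V}) x := [set y in S | idx y == idx x].

Fixpoint dec (h : nat) (S : {set V}) : Prop :=
  match h with
  | 0 => #|S| = 1
  | h'.+1 => #|S| = 1 \/ exists (idx : V -> nat) (lab : V -> nat) (R : nat -> nat -> bool),
      [/\ forall x, x \in S -> lab x < kb, cross idx lab R S & forall x, x \in S -> dec h' (blk idx S x)]
  end.

Lemma dec_succ h S : dec h S -> dec h.+1 S.
Proof.
elim: h S => [|h IH] S /=; first by left.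
case=> [e|[idx [lab [R [h1 h2 h3]]]]]; first by left.
right; exists idx, lab, R; split => // x xS; exact: IH (h3 x xS).
Qed.

Lemma dec_le h h' S : h <= h' -> dec h S -> dec h' S.
Proof. move=> /subnKC <-; elim: (h' - h) => [|m IH]; rewrite ?addn0 // addnS => H; exact: dec_succ (IH H). Qed.

End Dec.

Lemma pick_inj (T1 T2 : finType) (f : T1 -> T2) x : injective f -> [pick z | f z == f x] = Some x.
Proof. move=> inj; case: pickP => [z /eqP/inj -> //|/(_ x)]; by rewrite eqxx. Qed.

Lemma dec_emb (G1 G2 : graph) kb (f : gV G1 -> gV G2) : injective f ->
  (forall x y, gE (f x) (f y) = gE x y) -> forall h S, dec kb h S -> dec kb h (f @: S).
Proof.
move=> inj fE h; elim: h => [|h IH] S /=; first by rewrite card_imset.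
case=> [e|[idx [lab [R [h1 h2 h3]]]]]; first by left; rewrite card_imset.
right.
exists (fun y => if [pick z | f z == y] is Some z then idx z else 0).
exists (fun y => if [pick z | f z == y] is Some z then lab z else 0).
exists R; split.
- by move=> _ /imsetP [x xS ->] /=; rewrite pick_inj //; apply: h1.
- move=> _ _ /imsetP [x xS ->] /imsetP [y yS ->] /=; rewrite !pick_inj // fE; exact: h2.
- move=> _ /imsetP [x xS ->].
  have -> : blk (fun y => if [pick z | f z == y] is Some z then idx z else 0) (f @: S) (f x)
            = f @: blk idx S x.
    apply/setP => y; rewrite !inE pick_inj //; apply/andP/imsetP.
    + case=> /imsetP [z zS ->]; rewrite pick_inj // => e; exists z => //; by rewrite inE zS.
    + case=> z; rewrite inE => /andP [zS e] ->; by rewrite mem_imset // pick_inj.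
  exact: IH (h3 x xS).
Qed.

Lemma imsetT_bij (T1 T2 : finType) (f : T1 -> T2) : bijective f -> f @: [set: T1] = [set: T2].
Proof. case=> g fK gK; apply/setP => y; rewrite !inE; apply/imsetP; exists (g y); by rewrite ?inE ?gK. Qed.

Lemma dec_iso (G1 G2 : graph) kb h : iso G1 G2 -> dec kb h [set: gV G1] -> dec kb h [set: gV G2].
Proof.
case=> f [bf fE] H; rewrite -(imsetT_bij bf); apply: dec_emb H => //; exact: bij_inj.
Qed.

Fixpoint pidx k (R : rel 'I_k) (Hs : seq (pgraph k)) : gV (pg (pprodn R Hs)) -> nat :=
  match Hs as Hs0 return gV (pg (pprodn R Hs0)) -> nat with
  | [::] => fun _ => 0
  | H :: Hs' => fun u : (gV (pg H) + gV (pg (pprodn R Hs')))%type =>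
      match u with inl _ => 0 | inr z => (@pidx k R Hs' z).+1 end
  end.

Definition Rn k (R : rel 'I_k) : nat -> nat -> bool := fun a b =>
  if insub a is Some a' then (if insub b is Some b' then R a' b' else false) else false.

Lemma Rn_val k (R : rel 'I_k) (a b : 'I_k) : Rn R a b = R a b.
Proof. by rewrite /Rn !valK. Qed.

Lemma pprodn_cross k (R : rel 'I_k) Hs (u w : gV (pg (pprodn R Hs))) :
  pidx u != pidx w -> gE u w = R (plab u) (plab w) || R (plab w) (plab u).
Proof.
elim: Hs u w => [|H Hs IH] /= u w; first by case: u.
case: u => [a|z]; case: w => [b|z'] //=.
rewrite eqSS => ne; exact: IH.
Qed.

Lemma pprodn_blk k kb h (R : rel 'I_k) Hs :
  allP (fun H => dec kb h [set: gV (pg H)]) Hs ->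
  forall u : gV (pg (pprodn R Hs)), dec kb h (blk (@pidx k R Hs) [set: _] u).
Proof.
elim: Hs => [|H Hs IH] /=; first by move=> _ [].
case=> hH hHs [a|z].
- have -> : blk (@pidx k R (H :: Hs)) [set: gV (pg (pprodn R (H :: Hs)))] (inl a)
       = (@inl _ _ : gV (pg H) -> gV (pg (pprodn R (H :: Hs)))) @: [set: gV (pg H)].
    apply/setP => -[b|z]; rewrite !inE /=; first by rewrite eqxx imset_f ?inE.
    by apply/esym/negbTE/imsetP => -[b _].
  apply: dec_emb hH => //; move=> x y [] //.
- have -> : blk (@pidx k R (H :: Hs)) [set: gV (pg (pprodn R (H :: Hs)))] (inr z)
       = (@inr _ _ : gV (pg (pprodn R Hs)) -> gV (pg (pprodn R (H :: Hs)))) @: blk (@pidx k R Hs) [set: _] z.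
    apply/setP => -[b|z']; rewrite !inE /=.
    + by apply/esym/negbTE/imsetP => -[b' _].
    + rewrite eqSS; apply/idP/imsetP => [e|[z'' hz [e]]]; first by exists z' => //; rewrite !inE.
      by move: hz; rewrite e !inE.
  apply: dec_emb (IH hHs z) => //; move=> x y [] //.
Qed.

Lemma pprodn_dec k kb h (R : rel 'I_k) Hs : k <= kb ->
  allP (fun H => dec kb h [set: gV (pg H)]) Hs -> dec kb h.+1 [set: gV (pg (pprodn R Hs))].
Proof.
move=> le hs; right; exists (@pidx k R Hs), (fun u => nat_of_ord (plab u)), (Rn R); split.
- move=> x _; exact: leq_trans (ltn_ord _) le.
- move=> x y _ _ ne; rewrite !Rn_val; exact: pprodn_cross.
- move=> x _; exact: pprodn_blk.
Qed.

Lemma tree_dec k' kb (t : dtree k') : k' <= kb -> dvalid t -> dec kb (dheight t) [set: gV (pg (droot t))].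
Proof.
move=> le; elim/dtree_ind': t => H ts IH /dvalidE [h1 h2].
change (dec kb (dheight (DNode H ts)) [set: gV (pg H)]).
case: ts IH h1 h2 => [|t ts] IH h1 h2; first by rewrite dheightE /= cardsT.
case: h1 => R isoH.
set m := (dheight (DNode H (t :: ts))).-1.
have hm : dheight (DNode H (t :: ts)) = m.+1 by rewrite prednK // dheight_pos.
rewrite hm; apply: dec_iso (iso_sym isoH) _.
apply: pprodn_dec => //; apply/allP_map.
have := allP_and (allP_and IH h2) (dheight_child H (t :: ts)).
apply: allP_imp => x [[Hx vx] hx]; apply: dec_le (Hx vx); by rewrite -ltnS -hm.
Qed.

Lemma wd_dec n G k : wd_le n G k -> dec k n [set: gV G].
Proof.
case=> k' [le [t [[vt isot] ht]]].
apply: dec_le ht _; apply: dec_iso isot _; exact: tree_dec.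
Qed.


Section Auto.
Variables (G : graph) (kb : nat).
Local Notation V := (gV G).

Definition canon (idx : V -> V) (S : {set V}) :=
  forall x, x \in S -> idx x \in S /\ idx (idx x) = idx x.

Lemma canonize (idx : V -> nat) (S : {set V}) : exists idx' : V -> V,
  canon idx' S /\ forall x y, x \in S -> y \in S -> (idx' x == idx' y) = (idx x == idx y).
Proof.
pose f x := odflt x [pick y in S | idx y == idx x].
have H1 x : x \in S -> exists y, [/\ [pick y in S | idx y == idx x] = Some y, y \in S & idx y = idx x].
  move=> xS; case: pickP => [y /andP[yS /eqP e]|/(_ x)]; first by exists y.
  by rewrite xS eqxx.
exists f; split.
- move=> x xS; have [y [py yS ey]] := H1 x xS; rewrite /f py /=; split => //.
  by rewrite ey py.
- move=> x y xS yS; have [x' [px x'S ex]] := H1 x xS; have [y' [py y'S ey]] := H1 y yS.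
  rewrite /f px py /=; case: (idx x =P idx y) => e.
    by move: px; rewrite e py => -[->]; rewrite eqxx.
  apply/eqP => exy; apply: e; by rewrite -ex -ey exy.
Qed.

Lemma blockresp (idx : V -> V) lab R (S : {set V}) (s : V -> V) : cross idx lab R S ->
  (forall x, x \in S -> s x \in S) -> (forall x, x \in S -> lab (s x) = lab x) ->
  (forall x y, x \in S -> y \in S -> idx x != idx y -> idx (s x) != idx (s y)) ->
  (forall x y, x \in S -> y \in S -> idx x == idx y -> gE (s x) (s y) = gE x y) ->
  forall x y, x \in S -> y \in S -> gE (s x) (s y) = gE x y.
Proof.
move=> cr hS hl hi he x y xS yS; case: (boolP (idx x == idx y)) => e; first exact: he.
by rewrite (cr _ _ (hS _ xS) (hS _ yS) (hi _ _ xS yS e)) (cr _ _ xS yS e) !hl.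
Qed.

Lemma card_blocks (idx : V -> V) (S : {set V}) b :
  (forall r, r \in idx @: S -> #|[set y in S | idx y == r]| <= b) -> #|S| <= #|idx @: S| * b.
Proof.
move=> H; have -> : #|S| = \sum_(x in S) 1 by rewrite sum1_card.
rewrite (partition_big_imset idx) /= -sum_nat_const.
apply: leq_sum => r rS; apply: leq_trans (H r rS); rewrite -sum1_card; apply: eq_leq.
by apply: eq_bigl => y; rewrite inE.
Qed.

Fixpoint Bnd h t := match h with
  | 0 => 1
  | h'.+1 => let t' := t * kb.+1 in let b := Bnd h' t' in ((t'.+1 ^ b) * 2 ^ (b * b)) * b end.

Lemma Bnd_pos h t : 0 < Bnd h t.
Proof. elim: h t => //= h IH t; by rewrite !muln_gt0 !expn_gt0 IH. Qed.

Definition autP (T : finType) (c : V -> T) (S : {set V}) (s : V -> V) :=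
  [/\ injective s, forall x, x \notin S -> s x = x, forall x, x \in S -> s x \in S,
      forall x, c (s x) = c x & forall x y, x \in S -> y \in S -> gE (s x) (s y) = gE x y].

Lemma auto_claim h : forall (T : finType) (c : V -> T) (S : {set V}), dec kb h S ->
  #|S| <= Bnd h #|T| \/ exists s, autP c S s /\ exists x, s x != x.
Proof.
elim: h => [|h IH] T c S /=; first by move=> ->; left.
case=> [e1|[idx0 [lab [R [hlab hcr hblk]]]]].
  left; rewrite e1; exact: (Bnd_pos h.+1).
have [idx [hcan hidx]] := canonize idx0 S.
have cr : cross idx lab R S.
  move=> x y xS yS ne; apply: hcr => //; by rewrite -hidx.
have blkE x : x \in S -> blk idx0 S x = [set y in S | idx y == idx x].
  move=> xS; apply/setP => y; rewrite !inE; case: (boolP (y \in S)) => //= yS; by rewrite hidx.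
pose Br r := [set y in S | idx y == r].
have BrS r y : y \in Br r -> y \in S /\ idx y = r by rewrite inE => /andP [? /eqP].
have hdec r : r \in idx @: S -> dec kb h (Br r).
  case/imsetP => x xS ->; rewrite /Br -blkE //; exact: hblk.
pose T' : finType := (T * 'I_kb.+1)%type.
pose c' (x : V) : T' := (c x, inord (lab x)).
have labE x y : x \in S -> y \in S -> c' x = c' y -> lab x = lab y.
  move=> xS yS [_ e]; have lx := ltnW (hlab _ xS); have ly := ltnW (hlab _ yS).
  by move: e => /(congr1 (@nat_of_ord kb.+1)); rewrite !inordK.
have cE x y : c' x = c' y -> c x = c y by case.
set b := Bnd h #|T'|.
case: (boolP [exists r in idx @: S, b < #|Br r|]) => [/existsP [r /andP [rS big]] | small].
  case: (IH T' c' (Br r) (hdec r rS)) => [le|[s [[sinj sout sin sc sE] [x0 hx0]]]].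
    by move: big; rewrite ltnNge le.
  right; exists s; split; last by exists x0.
  have sBr y : y \in S -> idx (s y) = idx y.
    move=> yS; case: (boolP (y \in Br r)) => yB; last by rewrite sout.
    by have [_ ->] := BrS _ _ (sin _ yB); have [_ ->] := BrS _ _ yB.
  have sS y : y \in S -> s y \in S.
    move=> yS; case: (boolP (y \in Br r)) => yB; last by rewrite sout.
    by have [] := BrS _ _ (sin _ yB).
  split => //.
  - move=> y yS; apply: sout; apply/negP => /BrS [yS' _]; by rewrite yS' in yS.
  - move=> y; exact: cE (sc y).
  - apply: (blockresp cr) => //.
    + move=> y yS; exact: labE (sS _ yS) yS (sc y).
    + by move=> x y xS yS; rewrite !sBr.
    + move=> x y xS yS /eqP e; case: (boolP (x \in Br r)) => xB.
        apply: sE => //; have [_ ex] := BrS _ _ xB; by rewrite /Br inE yS -e ex eqxx.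
      have yB : y \notin Br r by move: xB; rewrite /Br !inE xS yS e.
      by rewrite !sout.
have sm r : r \in idx @: S -> #|Br r| <= b.
  move=> rS; rewrite leqNgt; apply: contra small => h'; apply/existsP; exists r; by rewrite rS.
pose code (r : V) : ({ffun 'I_b -> option T'} * {ffun 'I_b * 'I_b -> bool})%type :=
  ([ffun i : 'I_b => if i < #|Br r| then Some (c' (nth r (enum (Br r)) i)) else None],
   [ffun p : 'I_b * 'I_b => gE (nth r (enum (Br r)) p.1) (nth r (enum (Br r)) p.2)]).
case: (boolP [forall r1 in idx @: S, forall r2 in idx @: S, (code r1 == code r2) ==> (r1 == r2)]) => [inj|ninj].
  left.
  have injc : {in idx @: S &, injective code}.
    move=> r1 r2 h1 h2 e; apply/eqP.
    by move: inj => /forall_inP/(_ r1 h1)/forall_inP/(_ r2 h2)/implyP; apply; rewrite e.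
  apply: leq_trans (card_blocks sm) _.
  apply: (@leq_trans (((#|T'|.+1 ^ b) * 2 ^ (b * b)) * b)); last by rewrite /b /= card_prod card_ord.
  rewrite leq_mul2r; apply/orP; right.
  rewrite -(card_in_imset injc); apply: leq_trans (max_card _) _.
  by rewrite card_prod !card_ffun card_option card_bool [X in 2 ^ X]card_prod !card_ord.
right.
case/forall_inPn: ninj => r1 h1 /forall_inPn [r2 h2]; rewrite negb_imply => /andP [/eqP e ne].
pose phi r1 r2 x := nth r2 (enum (Br r2)) (index x (enum (Br r1))).
have match_ r1' r2' : r1' \in idx @: S -> r2' \in idx @: S -> code r1' = code r2' ->
  (forall x, x \in Br r1' -> [/\ phi r1' r2' x \in Br r2', phi r2' r1' (phi r1' r2' x) = x
                                 & c' (phi r1' r2' x) = c' x]) /\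
  (forall x y, x \in Br r1' -> y \in Br r1' -> gE (phi r1' r2' x) (phi r1' r2' y) = gE x y).
  move=> h1' h2' e'.
  have ec (i : 'I_b) : (if i < #|Br r1'| then Some (c' (nth r1' (enum (Br r1')) i)) else None)
                     = (if i < #|Br r2'| then Some (c' (nth r2' (enum (Br r2')) i)) else None).
    by have := congr1 (fun p : ({ffun 'I_b -> option T'} * {ffun 'I_b * 'I_b -> bool})%type => p.1 i) e'; rewrite /= !ffunE.
  have eg (i j : 'I_b) : gE (nth r1' (enum (Br r1')) i) (nth r1' (enum (Br r1')) j)
                       = gE (nth r2' (enum (Br r2')) i) (nth r2' (enum (Br r2')) j).
    by have := congr1 (fun p : ({ffun 'I_b -> option T'} * {ffun 'I_b * 'I_b -> bool})%type => p.2 (i, j)) e'; rewrite /= !ffunE.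
  have sz : #|Br r1'| = #|Br r2'|.
    case: (ltngtP #|Br r1'| #|Br r2'|) => // lt.
      have ib : #|Br r1'| < b := leq_trans lt (sm r2' h2').
      by have := ec (Ordinal ib); rewrite /= ltnn lt.
    have ib : #|Br r2'| < b := leq_trans lt (sm r1' h1').
    by have := ec (Ordinal ib); rewrite /= ltnn lt.
  have ixb x : x \in Br r1' -> index x (enum (Br r1')) < b.
    move=> xB; apply: leq_trans (sm r1' h1'); by rewrite cardE index_mem mem_enum.
  have ixs x : x \in Br r1' -> index x (enum (Br r1')) < #|Br r1'|.
    by move=> xB; rewrite cardE index_mem mem_enum.
  split.
  - move=> x xB; split.
    + rewrite /phi -mem_enum; apply: mem_nth; by rewrite -cardE -sz ixs.
    + rewrite /phi index_uniq ?enum_uniq //; last by rewrite -cardE -sz ixs.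
      by rewrite nth_index ?mem_enum.
    + have := ec (Ordinal (ixb x xB)); rewrite /= -sz ixs // nth_index ?mem_enum //.
      by move=> /(congr1 (fun o => if o is Some v then v else c' x)) /= hh; rewrite /phi -hh.
  - move=> x y xB yB; have := eg (Ordinal (ixb x xB)) (Ordinal (ixb y yB)).
    by rewrite /= !nth_index ?mem_enum.
have [m12 g12] := match_ r1 r2 h1 h2 e.
have [m21 g21] := match_ r2 r1 h2 h1 (esym e).
pose B1 := Br r1; pose B2 := Br r2.
have disj x : x \in B1 -> x \notin B2.
  move=> /BrS [_ ex]; rewrite inE ex; by rewrite (negbTE ne) andbF.
pose s x := if x \in B1 then phi r1 r2 x else if x \in B2 then phi r2 r1 x else x.
have sB1 x : x \in B1 -> s x = phi r1 r2 x by rewrite /s => ->.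
have sB2 x : x \in B2 -> s x = phi r2 r1 x.
  move=> xB; have x1 : (x \in B1) = false.
    by apply/negP => xB1; rewrite (negbTE (disj _ xB1)) in xB.
  by rewrite /s x1 xB.
have sO x : x \notin B1 -> x \notin B2 -> s x = x by rewrite /s => /negbTE -> /negbTE ->.
have ss x : s (s x) = x.
  case: (boolP (x \in B1)) => x1.
    have [p2 pp _] := m12 x x1; by rewrite (sB1 x x1) sB2.
  case: (boolP (x \in B2)) => x2; last by rewrite !sO.
  have [p1 pp _] := m21 x x2; by rewrite (sB2 x x2) sB1.
have rS1 : r1 \in B1.
  rewrite /B1 /Br inE; case/imsetP: (h1) => x xS ->; have [iS ii] := hcan x xS; by rewrite iS ii eqxx.
have sS x : x \in S -> s x \in S.
  move=> xS; case: (boolP (x \in B1)) => x1.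
    by rewrite sB1 //; have [/BrS [] ] := m12 x x1.
  case: (boolP (x \in B2)) => x2; last by rewrite sO.
  by rewrite sB2 //; have [/BrS [] ] := m21 x x2.
have sc' x : c' (s x) = c' x.
  case: (boolP (x \in B1)) => x1; first by rewrite sB1 //; have [_ _ ->] := m12 x x1.
  case: (boolP (x \in B2)) => x2; last by rewrite sO.
  by rewrite sB2 //; have [_ _ ->] := m21 x x2.
pose sw r := if r == r1 then r2 else if r == r2 then r1 else r.
have sidx x : x \in S -> idx (s x) = sw (idx x).
  move=> xS; rewrite /sw.
  case: (boolP (x \in B1)) => x1.
    rewrite sB1 //; have [/BrS [_ ->] _ _] := m12 x x1; have [_ ->] := BrS _ _ x1; by rewrite eqxx.
  case: (boolP (x \in B2)) => x2.
    rewrite sB2 //; have [/BrS [_ ->] _ _] := m21 x x2; have [_ ->] := BrS _ _ x2.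
    by rewrite (eq_sym r2 r1) (negbTE ne) eqxx.
  rewrite sO //; move: x1 x2; rewrite /B1 /B2 /Br !inE xS /= => /negbTE -> /negbTE -> //.
have swK : cancel sw sw.
  move=> r; rewrite /sw; case: (r =P r1) => [->|n1]; first by rewrite eq_sym (negbTE ne) eqxx.
  case: (r =P r2) => [->|n2]; first by rewrite eqxx.
  by move/eqP/negbTE: n1 => ->; move/eqP/negbTE: n2 => ->.
exists s; split; last first.
  exists r1; rewrite sB1 //; apply/eqP => eq1; have [p2 _ _] := m12 r1 rS1.
  by move: (disj _ rS1); rewrite -eq1 p2.
split.
- exact: can_inj ss.
- move=> x xS; apply: sO; apply/negP => /BrS [xS' _]; by rewrite xS' in xS.
- exact: sS.
- move=> x; exact: cE (sc' x).
- apply: (blockresp cr) => //.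
  + move=> x xS; exact: labE (sS _ xS) xS (sc' x).
  + move=> x y xS yS ne'; rewrite !sidx //; apply: contra ne' => /eqP/(can_inj swK) ->; by [].
  + move=> x y xS yS /eqP exy.
    case: (boolP (x \in B1)) => x1.
      have y1 : y \in B1 by have [_ ex] := BrS _ _ x1; rewrite /B1 /Br inE yS -exy ex eqxx.
      by rewrite !sB1 // g12.
    case: (boolP (x \in B2)) => x2.
      have y2 : y \in B2 by have [_ ex] := BrS _ _ x2; rewrite /B2 /Br inE yS -exy ex eqxx.
      by rewrite !sB2 // g21.
    have y1 : y \notin B1 by move: x1; rewrite /B1 /Br !inE xS yS exy.
    have y2 : y \notin B2 by move: x2; rewrite /B2 /Br !inE xS yS exy.
    by rewrite !sO.
Qed.

End Auto.


Fixpoint mbnd (f : mso) : nat :=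
  match f with
  | MEdge _ _ | MEq _ _ => 0
  | MIn _ j => j.+1
  | MNot f => mbnd f
  | MAnd f g => maxn (mbnd f) (mbnd g)
  | MEx1 _ f => mbnd f
  | MEx2 j f => maxn j.+1 (mbnd f)
  end.

Lemma sat_v2 G f : forall v1 (v2 v2' : nat -> {set gV G}),
  (forall j, j < mbnd f -> v2 j = v2' j) -> sat f v1 v2 <-> sat f v1 v2'.
Proof.
elim: f => [i j|i j|i j|f IH|f IHf g IHg|i f IH|j f IH] v1 v2 v2' e /=.
- by [].
- by [].
- by rewrite e.
- by rewrite (IH v1 v2 v2').
- have e1 : forall l, l < mbnd f -> v2 l = v2' l.
    by move=> l lt; apply: e; rewrite leq_max lt.
  have e2 : forall l, l < mbnd g -> v2 l = v2' l.
    by move=> l lt; apply: e; rewrite leq_max lt orbT.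
  by rewrite (IHf v1 v2 v2' e1) (IHg v1 v2 v2' e2).
- split=> -[a h]; exists a; [rewrite -(IH _ v2 v2') | rewrite (IH _ v2 v2')] => //.
- have e' A : forall l, l < mbnd f -> (if l == j then A else v2 l) = (if l == j then A else v2' l).
    move=> l lt; case: eqP => // _; apply: e; by rewrite leq_max lt orbT.
  split=> -[A h]; exists A; [rewrite -(IH _ _ _ (e' A)) | rewrite (IH _ _ _ (e' A))] => //.
Qed.

Lemma sat_aut G f (s : gV G -> gV G) : bijective s -> (forall x y, gE (s x) (s y) = gE x y) ->
  forall v1 v2, sat f v1 v2 <-> sat f (fun i => s (v1 i)) (fun j => s @: v2 j).
Proof.
move=> [g sK gK] sE; have sinj : injective s by exact: can_inj sK.
elim: f => [i j|i j|i j|f IH|f IHf g' IHg|i f IH|j f IH] v1 v2 /=.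
- by rewrite sE.
- by split => [->|/sinj].
- by rewrite mem_imset.
- by rewrite IH.
- by rewrite IHf IHg.
- split => -[a h].
  + exists (s a); move/IH: h; congr sat; apply: functional_extensionality => l; by case: eqP.
  + exists (g a); apply/IH; move: h; congr sat; apply: functional_extensionality => l; case: eqP => //; by rewrite gK.
- split => -[A h].
  + exists (s @: A); move/IH: h; congr sat; apply: functional_extensionality => l; by case: eqP.
  + exists (g @: A); apply/IH; move: h; congr sat; apply: functional_extensionality => l; case: eqP => // _.
    apply/setP => y; apply/idP/imsetP => [yA|[z /imsetP [w wA ->] ->]]; last by rewrite gK.
    by exists (g y); rewrite ?gK // imset_f.
Qed.

Lemma ord_aut_id (T : finType) (r : T -> T -> Prop) (s : T -> T) :
  linear_order r -> injective s -> (forall a b, r (s a) (s b) <-> r a b) -> forall a, s a = a.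
Proof.
case=> refl anti trans total sinj sr.
have [g sK gK] := injF_bij sinj.
pose rb a b := if excluded_middle_informative (r a b) then true else false.
have rbP a b : rb a b <-> r a b by rewrite /rb; case: excluded_middle_informative.
pose D a := [set b | rb b a].
have DE a : D (s a) = s @: D a.
  apply/setP => y; rewrite inE; apply/idP/imsetP.
  - move/rbP => h; exists (g y); last by rewrite gK.
    by rewrite inE; apply/rbP; rewrite -sr gK.
  - by case=> z; rewrite inE => /rbP h ->; apply/rbP; rewrite sr.
have card_eq a : #|D (s a)| = #|D a| by rewrite DE card_imset.
have key x y : r x y -> #|D x| = #|D y| -> x = y.
  move=> rxy ce; have sub : D x \subset D y.
    apply/subsetP => z; rewrite !inE => /rbP h; apply/rbP; exact: trans rxy.
  have /eqP eD : D x == D y by rewrite -(subset_leqif_cards sub) ce.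
  have : y \in D x by rewrite eD inE; apply/rbP; exact: refl.
  by rewrite inE => /rbP h; apply: anti.
move=> a; case: (total a (s a)) => h.
- by apply/esym; apply: key h _; rewrite card_eq.
- by apply: key h _.
Qed.

Lemma mso_fin n k C : (forall G, C G -> wd_le n G k) -> mso_orderable C -> finite_upto_iso C.
Proof.
move=> Hwd [phi Hphi].
pose M := mbnd phi.
apply: (@bounded_size_finite _ (Bnd k n #|{ffun 'I_M -> bool}|)) => G CG.
case: (posnP #|gV G|) => [->|pos] //.
have [P [refl anti trans total]] := Hphi G CG pos.
pose c (x : gV G) := [ffun j : 'I_M => x \in P j].
have := @auto_claim G k n _ c setT (wd_dec (Hwd G CG)).
rewrite cardsT; case=> // -[s [[sinj _ _ sc sE] [x hx]]].
exfalso; move/eqP: hx; apply.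
have bs := injF_bij sinj.
have sEall a b : gE (s a) (s b) = gE a b by apply: sE; rewrite inE.
have sP j : j < M -> s @: P j = P j.
  move=> lt; have [g sK gK] := bs.
  have mem y : (s y \in P j) = (y \in P j).
    by have := congr1 (fun f : {ffun 'I_M -> bool} => f (Ordinal lt)) (sc y); rewrite /c !ffunE.
  apply/setP => y; apply/imsetP/idP => [[z zP ->]|yP]; first by rewrite mem.
  by exists (g y); rewrite ?gK // -mem gK.
apply: (ord_aut_id (r := fun a b => sat phi (fun i => if i == 0 then a else b) P)) => //.
move=> a b; rewrite [X in _ <-> X](sat_aut phi bs sEall).
have -> : (fun i => s (if i == 0 then a else b)) = (fun i => if i == 0 then s a else s b).
  by apply: functional_extensionality => i; case: eqP.
apply: sat_v2 => j lt; by rewrite sP.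
Qed.


Section Cut.
Variables (G : graph) (kb : nat).
Local Notation V := (gV G).

Definition icut (S : {set V}) K q := exists (idx : V -> V) (lab : V -> nat) (R : nat -> nat -> bool),
  [/\ canon idx S, forall x, x \in S -> lab x < K, cross idx lab R S & q <= #|idx @: S|].

Fixpoint Kf h := match h with 0 => 1 | h'.+1 => 2 * kb.+1 * Kf h' end.
Lemma Kf_pos h : 0 < Kf h.
Proof. by elim: h => //= h IH; rewrite !muln_gt0 IH. Qed.

Lemma dec_odd m l : l < kb.+1 ->
  [/\ odd ((m * kb.+1 + l).*2.+1), ((m * kb.+1 + l).*2.+1)./2 %/ kb.+1 = m
    & ((m * kb.+1 + l).*2.+1)./2 %% kb.+1 = l].
Proof.
move=> lt; have h2 : ((m * kb.+1 + l).*2.+1)./2 = m * kb.+1 + l.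
  by rewrite -[X in X./2]add1n -[1]/(nat_of_bool true) half_bit_double.
rewrite h2 /= odd_double divnMDl // modnMDl divn_small // modn_small //; by rewrite addn0.
Qed.

Lemma dec_even l : l < kb.+1 -> ~~ odd (l.*2) /\ (l.*2)./2 %% kb.+1 = l.
Proof. by move=> lt; rewrite odd_double half_double modn_small. Qed.

Lemma icut_combine (S : {set V}) idx0 lab0 R0 K r q : canon idx0 S ->
  (forall x, x \in S -> lab0 x < kb.+1) -> cross idx0 lab0 R0 S -> r \in idx0 @: S ->
  icut [set y in S | idx0 y == r] K q -> icut S (2 * kb.+1 * K) q.
Proof.
move=> hcan hl0 cr0 rS [idx1 [lab1 [R1 [c1 l1 cr1 q1]]]].
set B := [set y in S | idx0 y == r].
have BS y : y \in B -> y \in S /\ idx0 y = r by rewrite inE => /andP [? /eqP].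
have nB x : x \in S -> x \notin B -> idx0 x != r.
  by move=> xS; rewrite inE xS.
pose idx2 x := if x \in B then idx1 x else idx0 x.
pose lab2 x := if x \in B then (lab1 x * kb.+1 + lab0 x).*2.+1 else (lab0 x).*2.
pose R2 a b := if odd a && odd b then R1 (a./2 %/ kb.+1) (b./2 %/ kb.+1)
               else R0 (a./2 %% kb.+1) (b./2 %% kb.+1).
exists idx2, lab2, R2; split.
- move=> x xS; rewrite /idx2; case: (boolP (x \in B)) => xB.
    have [i1B i1i] := c1 x xB; rewrite i1B i1i; split => //; exact: (BS _ i1B).1.
  have [i0S i0i] := hcan x xS.
  have -> : (idx0 x \in B) = false by rewrite inE i0S i0i; apply/negbTE; exact: nB.
  by [].
- have Kpos : 0 < K.
    case/imsetP: (rS) => x xS er; have [i0S i0i] := hcan x xS.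
    have rB : r \in B by rewrite /B inE er i0S i0i eqxx.
    exact: leq_ltn_trans (l1 r rB).
  move=> x xS; rewrite /lab2; case: (boolP (x \in B)) => xB.
    have h1 := l1 x xB; have h0 := hl0 x xS; nia.
  have h0 := hl0 x xS; nia.
- have Dm x : x \in S -> (lab2 x)./2 %% kb.+1 = lab0 x.
    move=> xS; rewrite /lab2; case: (boolP (x \in B)) => xB.
      by have [] := dec_odd (lab1 x) (hl0 x xS).
    by have [] := dec_even (hl0 x xS).
  have Dodd x : x \in S -> odd (lab2 x) = (x \in B).
    move=> xS; rewrite /lab2; case: (boolP (x \in B)) => xB.
      by have [] := dec_odd (lab1 x) (hl0 x xS).
    by have [/negbTE] := dec_even (hl0 x xS).
  have Dd x : x \in B -> (lab2 x)./2 %/ kb.+1 = lab1 x.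
    move=> xB; rewrite /lab2 xB; by have [] := dec_odd (lab1 x) (hl0 x (BS _ xB).1).
  have R2E x y : x \in S -> y \in S -> R2 (lab2 x) (lab2 y) =
      if (x \in B) && (y \in B) then R1 (lab1 x) (lab1 y) else R0 (lab0 x) (lab0 y).
    move=> xS yS; rewrite /R2 !Dodd //; case: (boolP (x \in B)) => xB; case: (boolP (y \in B)) => yB //=;
      by rewrite ?Dd ?Dm.
  move=> x y xS yS; rewrite /idx2 !R2E //.
  case: (boolP (x \in B)) => xB; case: (boolP (y \in B)) => yB /= ne.
  + exact: cr1.
  + apply: cr0 => //; have [_ ->] := BS _ xB; by rewrite eq_sym nB.
  + apply: cr0 => //; have [_ ->] := BS _ yB; by rewrite nB.
  + exact: cr0.
- apply: leq_trans q1 (subset_leq_card _); apply/subsetP => _ /imsetP [x xB ->].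
  apply/imsetP; exists x; first exact: (BS _ xB).1.
  by rewrite /idx2 xB.
Qed.

Lemma flatten_bound D h : forall S, dec kb h S ->
  (forall q, icut S (Kf h) q -> q <= D) -> #|S| <= D ^ h.
Proof.
elim: h => [|h IH] S /=; first by move=> ->.
case=> [e1|[idx0 [lab0 [R0 [hl0 hcr hblk]]]]] HD.
  have [s sS] : exists s, s \in S by apply/card_gt0P; rewrite e1.
  have D1 : 1 <= D.
    apply: HD; exists (fun _ => s), (fun _ => 0), (fun _ _ => false); split.
    - by move=> x _.
    - by move=> x _; exact: (Kf_pos h.+1).
    - by move=> x y _ _; rewrite eqxx.
    - by apply/card_gt0P; exists s; apply/imsetP; exists s.
  by rewrite e1 expn_gt0 D1.
have [idx [hcan hidx]] := canonize idx0 S.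
have cr : cross idx lab0 R0 S.
  move=> x y xS yS ne; apply: hcr => //; by rewrite -hidx.
have hl0' x : x \in S -> lab0 x < kb.+1 by move=> xS; apply: ltnW; exact: hl0.
have blkE x : x \in S -> blk idx0 S x = [set y in S | idx y == idx x].
  move=> xS; apply/setP => y; rewrite !inE; case: (boolP (y \in S)) => //= yS; by rewrite hidx.
have pD : #|idx @: S| <= D.
  apply: HD; exists idx, lab0, R0; split => //.
  move=> x xS; apply: leq_trans (hl0 x xS) _.
  have := Kf_pos h; rewrite /=; nia.
have bl r : r \in idx @: S -> #|[set y in S | idx y == r]| <= D ^ h.
  move=> rS; apply: IH.
    by case/imsetP: (rS) => x xS ->; rewrite -blkE //; exact: hblk.
  move=> q hq; apply: HD; exact: icut_combine hcan hl0' cr rS hq.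
apply: leq_trans (card_blocks bl) _.
by rewrite expnS leq_mul2r pD orbT.
Qed.

End Cut.

Section Blk.
Variables (G : graph) (K : nat) (idx : gV G -> gV G) (lab : gV G -> nat) (R0 : nat -> nat -> bool).
Hypothesis Hlab : forall x, lab x < K.
Hypothesis Hcr : forall x y, idx x != idx y -> gE x y = R0 (lab x) (lab y) || R0 (lab y) (lab x).

Definition bV (r : gV G) := {y : gV G | idx y == r}.
Definition brel (r : gV G) : rel (bV r) := fun a b => gE (val a) (val b).
Lemma brel_sym (r : gV G) : symmetric (@brel r). Proof. move=> a b; exact: gE_sym. Qed.
Lemma brel_irr (r : gV G) : irreflexive (@brel r). Proof. move=> a; exact: gE_irr. Qed.
Definition blkg (r : gV G) := Graph (@brel_sym r) (@brel_irr r).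
Definition blkpg (r : gV G) : pgraph K := @PGraph K (blkg r) (fun a => Ordinal (Hlab (val a))).
Definition Rk : rel 'I_K := fun a b => R0 a b.

Fixpoint gmap (rs : seq (gV G)) : gV (pg (pprodn Rk (map blkpg rs))) -> gV G :=
  match rs as rs0 return gV (pg (pprodn Rk (map blkpg rs0))) -> gV G with
  | [::] => fun v : void => match v with end
  | r :: rs' => fun u : (gV (pg (blkpg r)) + gV (pg (pprodn Rk (map blkpg rs'))))%type =>
      match u with inl a => val a | inr z => @gmap rs' z end
  end.

Lemma gmap_idx rs z : idx (@gmap rs z) \in rs.
Proof.
elim: rs z => [|r rs IH] /= z; first by case: z.
case: z => [a|z] /=; first by rewrite inE (eqP (valP a)) eqxx.
by rewrite inE IH orbT.
Qed.

Lemma gmap_lab rs z : nat_of_ord (@plab K (pprodn Rk (map blkpg rs)) z) = lab (@gmap rs z).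
Proof. elim: rs z => [|r rs IH] /= z; first by case: z. by case: z => [a|z] //=. Qed.

Lemma gmap_inj rs : uniq rs -> injective (@gmap rs).
Proof.
elim: rs => [|r rs IH] /=; first by move=> _ [].
case/andP => nr urs [a|z] [b|z'] //= e.
- by congr inl; apply: val_inj.
- by move: (@gmap_idx rs z'); rewrite -e (eqP (valP a)) (negbTE nr).
- by move: (@gmap_idx rs z); rewrite e (eqP (valP b)) (negbTE nr).
- by rewrite (IH urs _ _ e).
Qed.

Lemma gmap_E rs : uniq rs -> forall u w, gE (@gmap rs u) (@gmap rs w) = gE u w.
Proof.
elim: rs => [|r rs IH] /=; first by move=> _ [].
case/andP => nr urs [a|z] [b|z'] //=.
- rewrite Hcr; first by rewrite /Rk gmap_lab.
  apply/eqP => e; move: (@gmap_idx rs z'); by rewrite -e (eqP (valP a)) (negbTE nr).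
- rewrite Hcr; first by rewrite /Rk gmap_lab.
  apply/eqP => e; move: (@gmap_idx rs z); by rewrite e (eqP (valP b)) (negbTE nr).
- exact: IH.
Qed.

Lemma gmap_surj rs y : idx y \in rs -> exists z, @gmap rs z = y.
Proof.
elim: rs => [|r rs IH] //=; rewrite inE; case: (boolP (idx y == r)) => [e _|_ /= /IH [z ez]].
  by exists (inl (exist _ y e)).
by exists (inr z).
Qed.

End Blk.

Lemma icut_cut G K q : icut [set: gV G] K q -> exists p, q <= p /\ cut_witness G K p.
Proof.
case=> idx [lab [R0 [hcan hl hcr hq]]].
have Hlab x : lab x < K by apply: hl; rewrite inE.
have Hcr x y : idx x != idx y -> gE x y = R0 (lab x) (lab y) || R0 (lab y) (lab x).
  by apply: hcr; rewrite inE.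
pose rs := enum (idx @: [set: gV G]).
exists (size rs); split; first by rewrite -cardE.
exists (map (blkpg idx Hlab) rs), (@Rk K R0); split.
- by rewrite size_map.
- apply/allP_map; apply: allP_mem => r; rewrite mem_enum => /imsetP [x _ ->].
  have [_ ii] := hcan x (in_setT x).
  apply/card_gt0P; exists (exist (fun y => idx y == idx x) (idx x) (introT eqP ii)); by [].
- apply: iso_sym; exists (@gmap G K idx lab R0 Hlab rs); split; last exact: (@gmap_E G K idx lab R0 Hlab Hcr rs (enum_uniq _)).
  apply: inj_card_bij; first exact: gmap_inj (enum_uniq _).
  have sub : [set: gV G] \subset (@gmap G K idx lab R0 Hlab rs) @: [set: _].
    apply/subsetP => y _; have [|z <-] := @gmap_surj G K idx lab R0 Hlab rs y.
      by rewrite mem_enum imset_f.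
    exact: imset_f.
  rewrite -cardsT; apply: leq_trans (subset_leq_card sub) _; exact: leq_trans (leq_imset_card _ _) (max_card _).
Qed.

Lemma cut_fin n k C : (forall G, C G -> wd_le n G k) -> has_CUT C -> finite_upto_iso C.
Proof.
move=> Hwd [f Hf].
apply: (@bounded_size_finite _ (f (Kf k n) ^ n)) => G CG.
rewrite -cardsT; apply: (flatten_bound (wd_dec (Hwd G CG))) => q /icut_cut [p [le cw]].
exact: leq_trans le (Hf G CG _ _ cw).
Qed.

Theorem theorem5p22 (n k : nat) (C : graph_class) :
  (forall G, C G -> wd_le n G k) ->
  [<-> mso_orderable C; has_CUT C; bounded_outdeg_decomps n k C; finite_upto_iso C].
Proof.
move=> Hwd; tfae.
- move=> /(mso_fin Hwd); exact: fin_CUT.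
- move=> /(cut_fin Hwd); exact: fin_outdeg Hwd.
- exact: outdeg_fin.
- exact: fin_mso.
Qed.
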